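(* Let $\mathbb{G}$ be a finite quantum group. Suppose that $\alpha:C(\mathbb{G})\to C(\mathbb{G})\otimes\mathcal{O}(\mathbb{H})$ is an action of a compact quantum group $\mathbb{H}$ on $C(\mathbb{G})$ such that for every functional $\omega\in C(\mathbb{G})^*$ we have $(L_\omega\otimes\mathrm{id}_{\mathcal{O}(\mathbb{H})})\circ\alpha=\alpha\circ L_\omega$. Then there exists a unique Hopf $*$-morphism $\gamma:\mathcal{O}(\mathbb{G})\to\mathcal{O}(\mathbb{H})$ such that $(\mathrm{id}_{\mathcal{O}(\mathbb{G})}\otimes\gamma)\circ\Delta_{\mathbb{G}}=\alpha$.
   Context: $\mathcal{O}(\mathbb{G})=C(\mathbb{G})$ is the finite-dimensional Hopf $*$-algebra of $\mathbb{G}$ with comultiplication $\Delta_{\mathbb{G}}$. For $\omega\in C(\mathbb{G})^*$, $L_\omega=(\omega\otimes\mathrm{id})\circ\Delta_{\mathbb{G}}:C(\mathbb{G})\to C(\mathbb{G})$. An action of a compact quantum group $\mathbb{H}$ (with CQG Hopf $*$-algebra $\mathcal{O}(\mathbb{H})$, comultiplication $\Delta_{\mathbb{H}}$) on $C(\mathbb{G})$ is an injective unital $*$-homomorphism $\alpha:C(\mathbb{G})\to C(\mathbb{G})\otimes\mathcal{O}(\mathbb{H})$ with $(\alpha\otimes\mathrm{id})\alpha=(\mathrm{id}\otimes\Delta_{\mathbb{H}})\alpha$. *)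

(* Defs.v *)
(* Finite quantum groups / CQG Hopf *-algebras encoded
   concretely by coordinates: every complex vector space is modelled as the
   free vector space {malg CC[K]} on a basis K (multinomials' monalg), so that
   algebraic tensor products are free vector spaces on products of bases. *)
From HB Require Import structures.
From mathcomp Require Import all_boot all_order all_algebra.
From mathcomp Require Import finmap.
From mathcomp.multinomials Require Import monalg.
From mathcomp.real_closed Require Import complex.
From mathcomp.reals_stdlib Require Import Rstruct.

Set Implicit Arguments.
Unset Strict Implicit.
Unset Printing Implicit Defensive.

Import GRing.Theory Num.Theory.
Local Open Scope ring_scope.

Notation CC := (complex Rdefinitions.R).

Notation V K := {malg CC[K]}.

Definition bv {K : choiceType} (k : K) : V K := << k >>.

Definition lext {K : choiceType} {W : lmodType CC} (f : K -> W) (x : V K) : W :=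
  \sum_(k <- msupp x) x@_k *: f k.

Definition lfun {K : choiceType} (f : K -> CC) (x : V K) : CC :=
  \sum_(k <- msupp x) x@_k * f k.

Definition tens {K L : choiceType} (x : V K) (y : V L) : V (K * L)%type :=
  \sum_(k <- msupp x) \sum_(l <- msupp y) << x@_k * y@_l *g (k, l) >>.

Definition tmap {K L K' L' : choiceType} (f : V K -> V K') (g : V L -> V L')
  : V (K * L)%type -> V (K' * L')%type :=
  lext (fun p : K * L => tens (f (bv p.1)) (g (bv p.2))).

Definition assoc3 {K L M : choiceType} : V ((K * L) * M)%type -> V (K * (L * M))%type :=
  lext (fun p : (K * L) * M => bv (p.1.1, (p.1.2, p.2))).

Record salg (K : choiceType) := SAlg {
  smul : K -> K -> V K;
  sone : V K;
  sstar : K -> V K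
}.

Definition amul {K : choiceType} (A : salg K) (x y : V K) : V K :=
  lext (fun k => lext (fun l => smul A k l) y) x.

Definition astar {K : choiceType} (A : salg K) (x : V K) : V K :=
  \sum_(k <- msupp x) conjc (x@_k) *: sstar A k.

Definition tsalg {K L : choiceType} (A : salg K) (B : salg L) : salg (K * L)%type :=
  SAlg (fun p q : K * L => tens (smul A p.1 q.1) (smul B p.2 q.2))
       (tens (sone A) (sone B))
       (fun p : K * L => tens (sstar A p.1) (sstar B p.2)).

Definition is_star_alg {K : choiceType} (A : salg K) : Prop :=
  [/\ forall x y z, amul A (amul A x y) z = amul A x (amul A y z),
      forall x, amul A (sone A) x = x,
      forall x, amul A x (sone A) = x,
      forall x, astar A (astar A x) = x &
      forall x y, astar A (amul A x y) = amul A (astar A y) (astar A x)].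

Definition is_star_hom {K L : choiceType} (A : salg K) (B : salg L)
  (F : V K -> V L) : Prop :=
  [/\ forall x y, F (amul A x y) = amul B (F x) (F y),
      F (sone A) = sone B &
      forall x, F (astar A x) = astar B (F x)].

Record hopf (K : choiceType) := Hopf {
  halg : salg K;
  hcomul : K -> V (K * K)%type;
  hcounit : K -> CC;
  hanti : K -> V K
}.

Definition comul {K : choiceType} (H : hopf K) : V K -> V (K * K)%type :=
  lext (hcomul H).
Definition counit {K : choiceType} (H : hopf K) : V K -> CC :=
  lfun (hcounit H).
Definition antipode {K : choiceType} (H : hopf K) : V K -> V K :=
  lext (hanti H).

Definition is_hopf_star_alg {K : choiceType} (H : hopf K) : Prop :=
  is_star_alg (halg H) /\
  [/\
      is_star_hom (halg H) (tsalg (halg H) (halg H)) (comul H),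
      ((forall x y, counit H (amul (halg H) x y) = counit H x * counit H y)
        /\ counit H (sone (halg H)) = 1),
      (forall x, assoc3 (tmap (comul H) id (comul H x)) = tmap id (comul H) (comul H x)),
      (forall x, lext (fun p : K * K => hcounit H p.1 *: bv p.2) (comul H x) = x
        /\ lext (fun p : K * K => hcounit H p.2 *: bv p.1) (comul H x) = x) &
      (forall x,
        lext (fun p : K * K => amul (halg H) (hanti H p.1) (bv p.2)) (comul H x)
          = counit H x *: sone (halg H)
        /\ lext (fun p : K * K => amul (halg H) (bv p.1) (hanti H p.2)) (comul H x)
          = counit H x *: sone (halg H))].

(* a C*-norm on the *-algebra A (complex-valued but nonnegative, i.e. real) *)
Definition is_Cstar_norm {K : choiceType} (A : salg K) (N : V K -> CC) : Prop :=
  (forall x, 0 <= N x) /\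
  [/\ forall x, N x = 0 -> x = 0,
      forall x y, N (x + y) <= N x + N y,
      forall (c : CC) x, N (c *: x) = `|c| * N x,
      forall x y, N (amul A x y) <= N x * N y &
      forall x, N (amul A (astar A x) x) = N x ^+ 2].

(* A
   finite-dimensional normed space is complete, so a C*-norm makes it a
   C*-algebra. *)
Definition finite_quantum_group (n : nat) (G : hopf 'I_n) : Prop :=
  is_hopf_star_alg G /\ exists N : V 'I_n -> CC, is_Cstar_norm (halg G) N.

Definition unitary_corep {I : choiceType} (H : hopf I) (d : nat) (u : 'M[V I]_d) : Prop :=
  [/\ forall i j, comul H (u i j) = \sum_(k < d) tens (u i k) (u k j),
      forall i j, \sum_(k < d) amul (halg H) (astar (halg H) (u k i)) (u k j)
                    = (i == j)%:R *: sone (halg H) &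
      forall i j, \sum_(k < d) amul (halg H) (u i k) (astar (halg H) (u j k))
                    = (i == j)%:R *: sone (halg H)].

(* CQG Hopf *-algebra (Dijkhuizen--Koornwinder): a Hopf *-algebra spanned by
   the matrix coefficients of its finite-dimensional unitary corepresentations. *)
Definition cqg_hopf_alg {I : choiceType} (H : hopf I) : Prop :=
  is_hopf_star_alg H /\
  forall a : V I, exists (d : nat) (u : 'M[V I]_d) (c : 'M[CC]_d),
    unitary_corep H u /\ a = \sum_(i < d) \sum_(j < d) c i j *: u i j.

Definition is_action (n : nat) (G : hopf 'I_n) {I : choiceType} (H : hopf I)
  (al : 'I_n -> V ('I_n * I)%type) : Prop :=
  [/\ injective (lext al),
      is_star_hom (halg G) (tsalg (halg G) (halg H)) (lext al) &
      forall x, assoc3 (tmap (lext al) id (lext al x)) = tmap id (comul H) (lext al x)].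

(* L_omega = (omega (x) id) o Delta_G, for the functional omega with values w on the basis *)
Definition Lw (n : nat) (G : hopf 'I_n) (w : 'I_n -> CC) : V 'I_n -> V 'I_n :=
  fun x => lext (fun p : 'I_n * 'I_n => w p.1 *: bv p.2) (comul G x).

Definition is_hopf_star_morph {K L : choiceType} (G : hopf K) (H : hopf L)
  (g : K -> V L) : Prop :=
  is_star_hom (halg G) (halg H) (lext g) /\
  forall x, comul H (lext g x) = tmap (lext g) (lext g) (comul G x).

(* Main.v *)
Require Import Defs.
From HB Require Import structures.
From mathcomp Require Import all_boot all_order all_algebra.
From mathcomp Require Import finmap.
From mathcomp.multinomials Require Import monalg.
From mathcomp.real_closed Require Import complex.
From mathcomp.reals_stdlib Require Import Rstruct.
From Stdlib Require Import FunctionalExtensionality.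
Set Implicit Arguments.
Unset Strict Implicit.
Unset Printing Implicit Defensive.
Import GRing.Theory Num.Theory.
Local Open Scope ring_scope.

Section Gen.
Context {K : choiceType} {W : lmodType CC}.

Definition slext (phi : CC -> CC) (f : K -> W) (x : V K) : W :=
  \sum_(k <- msupp x) phi (x@_k) *: f k.

Lemma slextEw (phi : CC -> CC) f x (d : {fset K}) : phi 0 = 0 -> (msupp x `<=` d)%fset ->
  slext phi f x = \sum_(k <- d) phi (x@_k) *: f k.
Proof.
move=> h0 le; rewrite /slext (big_fset_incl _ le) //= => k _ /mcoeff_outdom ->.
by rewrite h0 scale0r.
Qed.

Lemma slext_lin (phi psi : CC -> CC) f c (x y : V K) :
  (forall a b, phi (a + b) = phi a + phi b) ->
  (forall a b, phi (a * b) = psi a * phi b) ->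
  slext phi f (c *: x + y) = psi c *: slext phi f x + slext phi f y.
Proof.
move=> hD hM.
have h0 : phi 0 = 0.
  have := hD 0 0; rewrite addr0 => /(congr1 (fun z => z - phi 0)) /=.
  by rewrite subrr addrK => e; rewrite -e.
set d := (msupp x `|` msupp y `|` msupp (c *: x + y))%fset.
have l1 : (msupp x `<=` d)%fset by rewrite /d -fsetUA fsubsetUl.
have l2 : (msupp y `<=` d)%fset by rewrite /d fsetUAC fsubsetUr.
have l3 : (msupp (c *: x + y) `<=` d)%fset by rewrite /d fsubsetUr.
rewrite (slextEw f h0 l1) (slextEw f h0 l2) (slextEw f h0 l3).
rewrite scaler_sumr -big_split /=; apply: eq_bigr => k _.
by rewrite mcoeffD mcoeffZ hD hM scalerDl scalerA.
Qed.

Lemma lextE (f : K -> W) x : lext f x = slext id f x. Proof. by []. Qed.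

Definition lin (F : V K -> W) := forall c x y, F (c *: x + y) = c *: F x + F y.

Lemma lin_lext f : lin (lext f).
Proof. by move=> c x y; rewrite !lextE; apply: slext_lin. Qed.

Lemma lin0 F : lin F -> F 0 = 0.
Proof.
move=> h; have := h 1 0 0; rewrite scaler0 addr0 scale1r.
by move/(congr1 (fun z => z - F 0)) => /=; rewrite subrr addrK => e; rewrite -e.
Qed.
Lemma linD F : lin F -> forall x y, F (x + y) = F x + F y.
Proof. by move=> h x y; have := h 1 x y; rewrite !scale1r. Qed.
Lemma linZ F : lin F -> forall c x, F (c *: x) = c *: F x.
Proof. by move=> h c x; have := h c x 0; rewrite !addr0 (lin0 h) addr0. Qed.
Lemma lin_sum F (I : Type) (s : seq I) (P : pred I) (g : I -> V K) : lin F ->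
  F (\sum_(i <- s | P i) g i) = \sum_(i <- s | P i) F (g i).
Proof.
move=> h; elim/big_rec2: _ => [|i y1 y2 _ <-]; first exact: lin0.
exact: linD.
Qed.

Lemma bvZ (c : CC) (k : K) : << c *g k >> = c *: bv k.
Proof. by apply/malgP => j; rewrite mcoeffZ !mcoeffU mulr_natr. Qed.

Lemma lin_eq F G : lin F -> lin G -> (forall k, F (bv k) = G (bv k)) ->
  forall x, F x = G x.
Proof.
move=> hF hG e x; rewrite (monalgE x) (lin_sum _ _ _ hF) (lin_sum _ _ _ hG).
by apply: eq_bigr => k _; rewrite bvZ (linZ hF) (linZ hG) e.
Qed.

Lemma lext_bv (f : K -> W) (k : K) : lext f (bv k) = f k.
Proof. by rewrite /lext /bv msuppU oner_eq0 big_seq_fset1 mcoeffUU scale1r. Qed.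

Lemma lext_fD (f g : K -> W) (x : V K) : lext (fun k => f k + g k) x = lext f x + lext g x.
Proof. by rewrite /lext -big_split /=; apply: eq_bigr => k _; rewrite scalerDr. Qed.
Lemma lext_fZ c (f : K -> W) (x : V K) : lext (fun k => c *: f k) x = c *: lext f x.
Proof. by rewrite /lext scaler_sumr; apply: eq_bigr => k _; rewrite !scalerA mulrC. Qed.
Lemma eq_lext (f g : K -> W) (x : V K) : f =1 g -> lext f x = lext g x.
Proof. by move=> e; apply: eq_bigr => k _; rewrite e. Qed.
End Gen.

Lemma lin_comp {K L : choiceType} {W : lmodType CC} (F : V L -> W) (G : V K -> V L) :
  lin F -> lin G -> lin (F \o G).
Proof. by move=> hF hG c x y /=; rewrite hG hF. Qed.

Lemma lext_comp {K : choiceType} {L : choiceType} {W : lmodType CC} (F : V L -> W) (f : K -> V L) x :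
  lin F -> F (lext f x) = lext (F \o f) x.
Proof.
move=> hF; apply: (lin_eq (F := F \o lext f)) => //.
  exact: lin_comp (lin_lext _).
  exact: lin_lext.
by move=> k /=; rewrite !lext_bv.
Qed.

Lemma lfun_lextE {K : choiceType} (f : K -> CC) x : lfun f x = lext (f : K -> CC^o) x.
Proof. by []. Qed.

Section Bil.
Context {K L : choiceType} {W : lmodType CC}.
Definition bilext (F : K -> L -> W) (x : V K) (y : V L) : W :=
  lext (fun k => lext (F k) y) x.
Lemma bil_l F y : lin (fun x => bilext F x y). Proof. exact: lin_lext. Qed.
Lemma bil_r F x : lin (bilext F x).
Proof.
move=> c y1 y2; rewrite /bilext -lext_fZ -lext_fD; apply: eq_lext => k.
exact: lin_lext.
Qed.
Lemma bil_bv F k l : bilext F (bv k) (bv l) = F k l.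
Proof. by rewrite /bilext !lext_bv. Qed.
Lemma bil_eq (B1 B2 : V K -> V L -> W) :
  (forall y, lin (B1^~ y)) -> (forall x, lin (B1 x)) ->
  (forall y, lin (B2^~ y)) -> (forall x, lin (B2 x)) ->
  (forall k l, B1 (bv k) (bv l) = B2 (bv k) (bv l)) -> forall x y, B1 x y = B2 x y.
Proof.
move=> h1 h2 h3 h4 e x y.
apply: (lin_eq (F := B1^~ y) (G := B2^~ y)) => // k.
by apply: (lin_eq (F := B1 (bv k)) (G := B2 (bv k))).
Qed.
End Bil.

Section Tens.
Context {K L : choiceType}.
Lemma tensE (x : V K) (y : V L) : tens x y = bilext (fun k l => bv (k, l)) x y.
Proof.
rewrite /bilext /lext /tens; apply: eq_bigr => k _; rewrite scaler_sumr.
by apply: eq_bigr => l _; rewrite bvZ scalerA.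
Qed.
Lemma tens_l (y : V L) : lin (fun x : V K => tens x y).
Proof. by move=> c a b; rewrite !tensE; apply: bil_l. Qed.
Lemma tens_r (x : V K) : lin (fun y : V L => tens x y).
Proof. by move=> c a b; rewrite !tensE; apply: bil_r. Qed.
Lemma tens_bv (k : K) (l : L) : tens (bv k) (bv l) = bv (k, l).
Proof. by rewrite tensE bil_bv. Qed.
End Tens.

Lemma tmap_bv {K L K' L' : choiceType} (f : V K -> V K') (g : V L -> V L') k l :
  tmap f g (bv (k, l)) = tens (f (bv k)) (g (bv l)).
Proof. by rewrite /tmap lext_bv. Qed.

Lemma tmap_lin {K L K' L' : choiceType} (f : V K -> V K') (g : V L -> V L') :
  lin (tmap f g).
Proof. exact: lin_lext. Qed.

Lemma tmap_tens {K L K' L' : choiceType} (f : V K -> V K') (g : V L -> V L') a b :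
  lin f -> lin g -> tmap f g (tens a b) = tens (f a) (g b).
Proof.
move=> hf hg.
apply: (bil_eq (B1 := fun a b => tmap f g (tens a b)) (B2 := fun a b => tens (f a) (g b))).
- by move=> y; apply: lin_comp (tmap_lin _ _) (tens_l _).
- by move=> x; apply: lin_comp (tmap_lin _ _) (tens_r _).
- by move=> y; apply: lin_comp (tens_l _) hf.
- by move=> x; apply: lin_comp (tens_r _) hg.
by move=> k l; rewrite tens_bv tmap_bv.
Qed.

Lemma tmap_comp {K L K' L' K'' L'' : choiceType} (f1 : V K' -> V K'') (g1 : V L' -> V L'')
  (f2 : V K -> V K') (g2 : V L -> V L') z :
  lin f1 -> lin g1 -> tmap f1 g1 (tmap f2 g2 z) = tmap (f1 \o f2) (g1 \o g2) z.
Proof.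
move=> h1 h2; apply: (lin_eq (F := tmap f1 g1 \o tmap f2 g2)) z.
- exact: lin_comp (tmap_lin _ _) (tmap_lin _ _).
- exact: tmap_lin.
by case=> k l /=; rewrite !tmap_bv tmap_tens.
Qed.

Lemma assoc3_lin {K L M : choiceType} : lin (@assoc3 K L M).
Proof. exact: lin_lext. Qed.

Lemma assoc3_tens {K L M : choiceType} (a : V K) (b : V L) (c : V M) :
  assoc3 (tens (tens a b) c) = tens a (tens b c).
Proof.
apply: (bil_eq (B1 := fun a b => assoc3 (tens (tens a b) c)) (B2 := fun a b => tens a (tens b c))).
- by move=> y; apply: lin_comp assoc3_lin (lin_comp (tens_l _) (tens_l _)).
- by move=> x; apply: lin_comp assoc3_lin (lin_comp (tens_l _) (tens_r _)).
- by move=> y; apply: tens_l.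
- by move=> x; apply: lin_comp (tens_r _) (tens_l _).
move=> k l; rewrite tens_bv.
apply: (lin_eq (F := fun c => assoc3 (tens (bv (k, l)) c)) (G := fun c => tens (bv k) (tens (bv l) c))).
- exact: lin_comp assoc3_lin (tens_r _).
- exact: lin_comp (tens_r _) (tens_r _).
by move=> m; rewrite !tens_bv /assoc3 lext_bv.
Qed.

Lemma lfun_lin {K : choiceType} (w : K -> CC) c x y :
  lfun w (c *: x + y) = c * lfun w x + lfun w y.
Proof. by rewrite !lfun_lextE; apply: (lin_lext (W := CC^o)). Qed.

Lemma lfun_bv {K : choiceType} (w : K -> CC) k : lfun w (bv k) = w k.
Proof. by rewrite lfun_lextE (lext_bv (W := CC^o)). Qed.

Lemma lfun_comp {K L : choiceType} (w : L -> CC) (f : K -> V L) x :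
  lfun w (lext f x) = lfun (fun k => lfun w (f k)) x.
Proof.
rewrite !lfun_lextE; apply: (lext_comp (W := CC^o) (F := lfun w)).
by move=> c a b; apply: lfun_lin.
Qed.

Definition S {K L : choiceType} (w : K -> CC) : V (K * L)%type -> V L :=
  lext (fun p : K * L => w p.1 *: bv p.2).

Lemma S_tens {K L : choiceType} (w : K -> CC) (a : V K) (b : V L) :
  S w (tens a b) = lfun w a *: b.
Proof.
apply: (bil_eq (B1 := fun a b => S w (tens a b)) (B2 := fun a b => lfun w a *: b)).
- by move=> y; apply: lin_comp (lin_lext _) (tens_l _).
- by move=> x; apply: lin_comp (lin_lext _) (tens_r _).
- by move=> y c a1 a2 /=; rewrite lfun_lin scalerDl scalerA.
- by move=> x c a1 a2 /=; rewrite scalerDr !scalerA mulrC.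
by move=> k l; rewrite tens_bv /S lext_bv lfun_bv.
Qed.

Lemma S_tmap {K L M : choiceType} (w : K -> CC) (h : V L -> V M) z :
  lin h -> S w (tmap id h z) = h (S w z).
Proof.
move=> hh; apply: (lin_eq (F := S w \o tmap id h) (G := h \o S w)) z.
- exact: lin_comp (lin_lext _) (tmap_lin _ _).
- exact: lin_comp hh (lin_lext _).
by case=> k l /=; rewrite tmap_bv S_tens lfun_bv /S lext_bv (linZ hh).
Qed.

Section Anti.
Context {K : choiceType} {W : lmodType CC}.
Definition alin (F : V K -> W) := forall c x y, F (c *: x + y) = conjc c *: F x + F y.
Lemma alin0 F : alin F -> F 0 = 0.
Proof.
move=> h; have := h 1 0 0; rewrite scaler0 addr0 rmorph1 scale1r.
by move/(congr1 (fun z => z - F 0)) => /=; rewrite subrr addrK => e; rewrite -e.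
Qed.
Lemma alinD F : alin F -> forall x y, F (x + y) = F x + F y.
Proof. by move=> h x y; have := h 1 x y; rewrite !scale1r rmorph1 scale1r. Qed.
Lemma alinZ F : alin F -> forall c x, F (c *: x) = conjc c *: F x.
Proof. by move=> h c x; have := h c x 0; rewrite !addr0 (alin0 h) addr0. Qed.
Lemma alin_sum F (I : Type) (s : seq I) (P : pred I) (g : I -> V K) : alin F ->
  F (\sum_(i <- s | P i) g i) = \sum_(i <- s | P i) F (g i).
Proof.
move=> h; elim/big_rec2: _ => [|i y1 y2 _ <-]; first exact: alin0.
exact: alinD.
Qed.
Lemma alin_eq F G : alin F -> alin G -> (forall k, F (bv k) = G (bv k)) ->
  forall x, F x = G x.
Proof.
move=> hF hG e x; rewrite (monalgE x) (alin_sum _ _ _ hF) (alin_sum _ _ _ hG).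
by apply: eq_bigr => k _; rewrite bvZ (alinZ hF) (alinZ hG) e.
Qed.
End Anti.

Lemma astar_alin {K : choiceType} (A : salg K) : alin (astar A).
Proof.
move=> c x y; apply: (slext_lin (phi := conjc) (psi := conjc)).
  by move=> a b; rewrite rmorphD.
by move=> a b; rewrite rmorphM.
Qed.

Lemma astar_bv {K : choiceType} (A : salg K) k : astar A (bv k) = sstar A k.
Proof. by rewrite /astar /bv msuppU oner_eq0 big_seq_fset1 mcoeffUU rmorph1 scale1r. Qed.

Lemma alin_comp_la {K L : choiceType} {W : lmodType CC} (F : V L -> W) (G : V K -> V L) :
  lin F -> alin G -> alin (F \o G).
Proof. by move=> hF hG c x y /=; rewrite hG hF. Qed.
Lemma alin_comp_al {K L : choiceType} {W : lmodType CC} (F : V L -> W) (G : V K -> V L) :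
  alin F -> lin G -> alin (F \o G).
Proof. by move=> hF hG c x y /=; rewrite hG hF. Qed.

Lemma lin_id {K : choiceType} : lin (@id (V K)). Proof. by []. Qed.

Lemma lfunZbv {K : choiceType} (w : K -> CC) c k : lfun w (c *: bv k) = c * w k.
Proof. by have := lfun_lin w c (bv k) 0; rewrite addr0 lfun_bv => ->; rewrite /lfun msupp0 big_nil addr0. Qed.

Lemma eq_lfun {K : choiceType} (w1 w2 : K -> CC) x : w1 =1 w2 -> lfun w1 x = lfun w2 x.
Proof. by move=> e; rewrite !lfun_lextE; apply: eq_lext. Qed.

Lemma counit_star {K : choiceType} (H : hopf K) :
  (forall x, astar (halg H) (astar (halg H) x) = x) ->
  (forall x, comul H (astar (halg H) x) = astar (tsalg (halg H) (halg H)) (comul H x)) ->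
  (forall x, lext (fun p : K * K => hcounit H p.1 *: bv p.2) (comul H x) = x
        /\ lext (fun p : K * K => hcounit H p.2 *: bv p.1) (comul H x) = x) ->
  forall k, counit H (sstar (halg H) k) = conjc (hcounit H k).
Proof.
move=> hinv hst hcu.
set A := halg H; set s := astar A.
pose e' k := conjc (counit H (sstar A k)).
have stepA : forall z : V (K * K)%type,
    lext (fun p : K * K => e' p.1 *: bv p.2) z = s (S (hcounit H) (astar (tsalg A A) z)).
  move=> z; apply: (lin_eq (F := lext (fun p : K * K => e' p.1 *: bv p.2))
     (G := s \o S (hcounit H) \o astar (tsalg A A))) z.
  - exact: lin_lext.
  - move=> c x y /=; rewrite /S (astar_alin _ c x y) lin_lext /s (astar_alin A) conjcK //.
  case=> k l /=; rewrite lext_bv astar_bv /= S_tens.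
  by rewrite /s (alinZ (astar_alin A)) -(astar_bv A l) hinv.
have stepA' : forall x, lext (fun p : K * K => e' p.1 *: bv p.2) (comul H x) = x.
  move=> x; rewrite stepA -hst.
  have := (hcu (s x)).1; rewrite -/(S (hcounit H) _) => ->.
  exact: hinv.
have stepB : forall x, counit H x = lfun e' x.
  move=> x; rewrite -{2}[x](hcu x).2 -{1}[x]stepA' /counit [LHS]lfun_comp [RHS]lfun_comp.
  by apply: eq_lfun => p /=; rewrite !lfunZbv mulrC.
move=> k; have := stepB (bv k); rewrite /counit !lfun_bv /e' => ->.
by rewrite conjcK.
Qed.

Lemma S_assoc {K L M : choiceType} (w : K -> CC) (a : V (K * L)%type) (b : V M) :
  S w (assoc3 (tens a b)) = tens (S w a) b.
Proof.
apply: (lin_eq (F := fun a => S w (assoc3 (tens a b))) (G := fun a => tens (S w a) b)) a.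
- exact: lin_comp (lin_lext _) (lin_comp assoc3_lin (tens_l _)).
- exact: lin_comp (tens_l _) (lin_lext _).
case=> k l /=; rewrite -tens_bv assoc3_tens !S_tens !lfun_bv.
by rewrite (linZ (tens_l _)).
Qed.

Lemma S_tmap_l {K L M : choiceType} (w : L -> CC) (f : V K -> V L) (z : V (K * M)%type) :
  lin f -> S w (tmap f id z) = S (fun k => lfun w (f (bv k))) z.
Proof.
move=> hf; apply: (lin_eq (F := S w \o tmap f id)) z.
- exact: lin_comp (lin_lext _) (tmap_lin _ _).
- exact: lin_lext.
by case=> k l /=; rewrite tmap_bv S_tens /S lext_bv.
Qed.

Lemma Sep {K L : choiceType} (y z : V (K * L)%type) :
  (forall w, S w y = S w z) -> y = z.
Proof.
move=> h; apply/malgP => -[i j].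
pose w k := ((k == i)%:R : CC).
have key : forall u : V (K * L)%type, (S w u)@_j = u@_(i, j).
  move=> u; apply: (lin_eq (W := CC^o) (F := fun u => (S w u)@_j) (G := fun u => u@_(i, j))) u.
  - by move=> c a b; rewrite /S (lin_lext _ c) mcoeffD mcoeffZ.
  - by move=> c a b; rewrite mcoeffD mcoeffZ.
  case=> k l; rewrite /S lext_bv /= mcoeffZ /bv !mcoeffU /w xpair_eqE.
  by case: (k == i); case: (l == j); rewrite /= ?mulr1 ?mul1r ?mul0r ?mulr0.
by rewrite -!key h.
Qed.

Lemma amul_bv {K : choiceType} (A : salg K) k l : amul A (bv k) (bv l) = smul A k l.
Proof. exact: bil_bv. Qed.
Lemma amul_l {K : choiceType} (A : salg K) y : lin (fun x => amul A x y).
Proof. exact: bil_l. Qed.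
Lemma amul_r {K : choiceType} (A : salg K) x : lin (amul A x).
Proof. exact: bil_r. Qed.

Unset Implicit Arguments.

Theorem lemma4p2 (n : nat) (G : hopf 'I_n) (I : choiceType) (H : hopf I)
  (al : 'I_n -> V ('I_n * I)%type) :
  finite_quantum_group G ->
  cqg_hopf_alg H ->
  is_action G H al ->
  (forall w : 'I_n -> CC, forall x : V 'I_n,
     tmap (Lw G w) id (lext al x) = lext al (Lw G w x)) ->
  exists! g : 'I_n -> V I,
    is_hopf_star_morph G H g /\
    forall x : V 'I_n, tmap id (lext g) (comul G x) = lext al x.
Proof.
move=> [[hsa [hDs [hcM hc1] hcoa hcu hanti]] _] [[_ [hDHs _ _ _ _]] _] [_ hal hac] hL.
case: hsa => _ _ _ hinv _.
case: hDs => _ _ hDstar.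
have cstar := counit_star hinv hDstar hcu.
set E := S (hcounit G) : V ('I_n * I)%type -> V I.
set al' := lext al.
pose g k := E (al k).
have linE : lin E by exact: lin_lext.
have lg : forall x, lext g x = E (al' x).
  by move=> x; rewrite /al' (lext_comp _ _ linE).
have EDelta : forall x, S (hcounit G) (comul G x) = x by move=> x; exact: (hcu x).1.
have h1 : forall x, tmap id (lext g) (comul G x) = al' x.
  move=> x; apply: Sep => w.
  rewrite (S_tmap _ _ (lin_lext _)) lg.
  have -> : S w (comul G x) = Lw G w x by [].
  rewrite /al' -hL /E (S_tmap_l _ _ (lin_comp (lin_lext _) (lin_lext _))).
  apply: eq_lext => p; congr (_ *: _).
  rewrite /= lfun_comp.
  have := (hcu (bv p.1)).2 => /(congr1 (lfun w)); rewrite lfun_comp lfun_bv => <-.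
  by apply: eq_lfun => q; rewrite !lfunZbv mulrC.
case: hal => halM hal1 halS.
set T := tsalg (halg G) (halg H).
have E_mul : forall a b, E (amul T a b) = amul (halg H) (E a) (E b).
  apply: (bil_eq (B1 := fun a b => E (amul T a b)) (B2 := fun a b => amul (halg H) (E a) (E b))).
  - by move=> y; apply: lin_comp linE (bil_l _ _).
  - by move=> x; apply: lin_comp linE (bil_r _ _).
  - by move=> y; apply: lin_comp (bil_l _ _) linE.
  - by move=> x; apply: lin_comp (bil_r _ _) linE.
  case=> i k [j l] /=.
  have -> : amul T (bv (i, k)) (bv (j, l)) = tens (smul (halg G) i j) (smul (halg H) k l).
    exact: bil_bv.
  rewrite /E S_tens /S !lext_bv /=.
  have -> : smul (halg G) i j = amul (halg G) (bv i) (bv j) by symmetry; exact: bil_bv.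
  have := hcM (bv i) (bv j); rewrite /counit !lfun_bv => ->.
  by rewrite (linZ (amul_l _ _)) (linZ (amul_r _ _)) scalerA amul_bv.
have E_star : forall a, E (astar T a) = astar (halg H) (E a).
  apply: (alin_eq (F := E \o astar T) (G := astar (halg H) \o E)).
  - exact: alin_comp_la linE (astar_alin _).
  - exact: alin_comp_al (astar_alin _) linE.
  case=> i k /=; rewrite astar_bv /= /E S_tens /S lext_bv /= -/(counit G _) cstar.
  by rewrite (alinZ (astar_alin _)) astar_bv.
exists g; split; [split; [split; [split | ] | ] | ].
- by move=> x y; rewrite !lg /al' halM E_mul.
- rewrite lg /al' hal1 /E S_tens -/(counit G (sone (halg G))) hc1 scale1r.
  by [].
- by move=> x; rewrite !lg /al' halS E_star.
- move=> x.
  pose Phi (y : V ('I_n * I)%type) : V (I * I)%type := S (hcounit G) (assoc3 (tmap al' id y)).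
  have C1 : forall z : V ('I_n * 'I_n)%type, Phi (tmap id (lext g) z) = tmap (lext g) (lext g) z.
    move=> z; apply: (lin_eq (F := Phi \o tmap id (lext g))) z.
    + exact: lin_comp (lin_comp (lin_lext _) (lin_comp assoc3_lin (tmap_lin _ _))) (tmap_lin _ _).
    + exact: tmap_lin.
    case=> i j /=; rewrite /Phi !tmap_bv.
    rewrite (@tmap_tens _ _ _ _ al' id (bv i) (lext g (bv j)) (lin_lext _) lin_id).
    by rewrite S_assoc /al' !lext_bv.
  rewrite lg /E; apply: etrans (C1 (comul G x)); rewrite h1.
  transitivity (S (hcounit G) (tmap id (comul H) (al' x))).
    by rewrite (S_tmap _ _ (lin_lext _)).
  by rewrite /Phi /al' hac.
- by move=> x; apply: h1.
move=> g' [_ hg']; apply: functional_extensionality => k.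
transitivity (E (al' (bv k))); first by rewrite /al' lext_bv.
rewrite -(hg' (bv k)) /E (S_tmap _ _ (lin_lext _)).
by rewrite EDelta lext_bv.
Qed.
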